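(* Let $n$ be a positive integer and let $\pi$ be chosen uniformly at random from the permutations of $[n]$ all of whose cycle lengths are odd. For an odd positive integer $k\le n$, let $Y_k$ be the number of elements of $[n]$ lying in $k$-cycles of $\pi$. Then \[ \mathbb{E}_o^{(n)}Y_k=\begin{cases}\dfrac{n(n-2)\cdots(n-k+1)}{(n-1)(n-3)\cdots(n-k)}, & n\text{ even},\\[2ex] \dfrac{(n-1)(n-3)\cdots(n-k+2)}{(n-2)(n-4)\cdots(n-k+1)}, & n\text{ odd},\end{cases} \] where an empty product equals $1$.
   Context: $\mathbb{E}_o^{(n)}$ denotes expectation under the uniform measure on permutations of $[n]$ with all cycle lengths odd. $Y_k=kX_k$, where $X_k$ is the number of $k$-cycles. *)

(* Defs.v *)
From mathcomp Require Import all_boot all_order all_algebra all_fingroup.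
Set Implicit Arguments. Unset Strict Implicit. Unset Printing Implicit Defensive.
Import GRing.Theory Num.Theory.
Local Open Scope ring_scope.

Definition cycle_len n (s : 'S_n) (x : 'I_n) : nat := #|porbit s x|.

Definition odd_cycle_perms n : {set 'S_n} :=
  [set s : 'S_n | [forall x, odd (cycle_len s x)]].

Definition Yk n (k : nat) (s : 'S_n) : nat :=
  #|[set x : 'I_n | cycle_len s x == k]|.

Definition EoY n (k : nat) : rat :=
  (\sum_(s in odd_cycle_perms n) (Yk k s)%:R) / (#|odd_cycle_perms n|)%:R.

(* Main.v *)
Require Import Defs.
From mathcomp Require Import all_boot all_order all_algebra all_fingroup.
From mathcomp Require Import zify ring.
Set Implicit Arguments. Unset Strict Implicit. Unset Printing Implicit Defensive.

Section Orb.
Variable T : finType.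
Implicit Types (s : {perm T}) (x z : T).

Lemma porbit_step s x z : z \in porbit s x -> s z \in porbit s x.
Proof. by case/porbitP=> i ->; rewrite -permM -expgSr mem_porbit. Qed.

Lemma orbit_closed s (A : {set T}) x :
  (forall z, z \in A -> s z \in A) -> x \in A -> porbit s x \subset A.
Proof.
move=> cl xA; apply/subsetP=> z /porbitP[i ->]; elim: i => [|i IH].
  by rewrite expg0 perm1.
by rewrite expgSr permM; apply: cl.
Qed.

Lemma porbit_same s x z : z \in porbit s x -> porbit s z = porbit s x.
Proof. by rewrite -eq_porbit_mem => /eqP. Qed.

End Orb.

Lemma porbit_morph (T U : finType) (s : {perm T}) (t : {perm U}) (h : T -> U) x :
  (forall w, t (h w) = h (s w)) -> porbit t (h x) = h @: porbit s x.
Proof.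
move=> H; apply/eqP; rewrite eqEsubset; apply/andP; split.
  apply: orbit_closed; last by apply: imset_f; apply: porbit_id.
  by move=> z /imsetP[w wP ->]; rewrite H imset_f // porbit_step.
apply/subsetP=> z /imsetP[w wP ->].
have: porbit s x \subset [set w | h w \in porbit t (h x)].
  apply: orbit_closed; last by rewrite inE porbit_id.
  by move=> v; rewrite !inE -H; apply: porbit_step.
by move/subsetP/(_ w wP); rewrite inE.
Qed.

Lemma cycle_len_conj n (s g : 'S_n) x : cycle_len (s ^ g)%g (g x) = cycle_len s x.
Proof.
by rewrite /cycle_len (porbit_morph (s := s) (h := g)) ?card_imset //; [apply: perm_inj | move=> w; rewrite permJ].
Qed.
Definition good m (P : pred nat) (s : 'S_m) (y : 'I_m) : bool :=
  P (cycle_len s y) && [forall x, (x \notin porbit s y) ==> odd (cycle_len s x)].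

Lemma good_conj m P (s g : 'S_m) y : good P (s ^ g)%g (g y) = good P s y.
Proof.
rewrite /good cycle_len_conj; congr (_ && _).
have E: porbit (s ^ g)%g (g y) = g @: porbit s y.
  by apply: porbit_morph => w; rewrite permJ.
apply/forallP/forallP => H x.
  by have := H (g x); rewrite E mem_imset ?cycle_len_conj //; apply: perm_inj.
rewrite -(permKV g x) E mem_imset ?cycle_len_conj; first exact: H.
exact: perm_inj.
Qed.

Lemma good_sym m P (y y0 : 'I_m) :
  #|[set s : 'S_m | good P s y]| = #|[set s : 'S_m | good P s y0]|.
Proof.
set g := tperm y y0.
have gV : (g^-1 = g)%g by exact: tpermV.
have ->: [set s : 'S_m | good P s y0] = (fun s => s ^ g)%g @: [set s : 'S_m | good P s y].
  apply/setP=> u; rewrite inE; apply/idP/imsetP.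
    move=> gu; exists (u ^ g)%g; last by rewrite -[X in _ = (_ ^ X)%g]gV conjgK.
    by rewrite inE -(tpermR y y0) -/g good_conj.
  by move=> [s]; rewrite inE => gs ->; rewrite -(tpermL y y0) good_conj.
by rewrite card_imset //; apply: conjg_inj.
Qed.
Section Ins.
Variable m : nat.

Definition ext (s : 'S_m.+1) : 'S_m.+2 := lift_perm ord_max ord_max s.
Definition ins (p : 'S_m.+1 * 'I_m.+2) : 'S_m.+2 := (tperm p.2 ord_max * ext p.1)%g.

Lemma ext_lift s x : ext s (lift ord_max x) = lift ord_max (s x).
Proof. exact: lift_perm_lift. Qed.

Lemma ext_max s : ext s ord_max = ord_max.
Proof. exact: lift_perm_id. Qed.

Lemma porbit_ext_lift s x :
  porbit (ext s) (lift ord_max x) = lift ord_max @: porbit s x.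
Proof. by apply: porbit_morph => w; rewrite ext_lift. Qed.

Lemma len_ext_lift s x : cycle_len (ext s) (lift ord_max x) = cycle_len s x.
Proof. by rewrite /cycle_len porbit_ext_lift card_imset //; apply: lift_inj. Qed.

Lemma porbit_fix (T : finType) (f : {perm T}) x : f x = x -> porbit f x = [set x].
Proof.
move=> fx; apply/eqP; rewrite eqEsubset; apply/andP; split.
  by apply: orbit_closed; [move=> z; rewrite !inE => /eqP ->; rewrite fx | rewrite inE].
by rewrite sub1set porbit_id.
Qed.

Lemma porbit_ext_max s : porbit (ext s) ord_max = [set ord_max].
Proof. by apply: porbit_fix; apply: ext_max. Qed.

Lemma ins_y p : ins p p.2 = ord_max.
Proof. by rewrite /ins permM tpermL ext_max. Qed.

Lemma ext_inj : injective ext.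
Proof.
move=> s t E; apply/permP => x; apply: (@lift_inj _ ord_max).
by rewrite -!ext_lift E.
Qed.

Lemma ins_inj : injective ins.
Proof.
move=> [s1 y1] [s2 y2] E.
have ey : y1 = y2.
  apply: (@perm_inj _ (ins (s2, y2))).
  rewrite -[in LHS]E; have -> := ins_y (s1, y1); symmetry; exact: (ins_y (s2, y2)).
move: E; rewrite /ins /= ey => /mulgI /ext_inj ->; done.
Qed.

Lemma ins_onto f : exists p, f = ins p.
Proof.
have : f \in ins @: setT.
  suff -> : ins @: setT = setT by rewrite inE.
  apply/eqP; rewrite eqEcard subsetT card_imset; last exact: ins_inj.
  by rewrite cardsT cardsT card_prod !card_Sn !card_ord factS mulnC leqnn.
by case/imsetP=> p _ ->; exists p.
Qed.

Lemma card_ins (Q : pred 'S_m.+2) :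
  #|[set f | Q f]| = #|[set p | Q (ins p)]|.
Proof.
rewrite -(card_imset _ ins_inj); apply: eq_card => f; rewrite [in LHS]inE.
apply/idP/imsetP.
  by case: (ins_onto f) => p -> Qp; exists p; rewrite ?inE.
by case=> p; rewrite inE => Qp ->.
Qed.

End Ins.
Section Ins2.
Variable m : nat.
Variables (s : 'S_m.+1) (y' : 'I_m.+1).
Let y : 'I_m.+2 := lift ord_max y'.
Let e := ext s.
Let f := ins (s, y).

Lemma fE z : f z = e (tperm y ord_max z).
Proof. by rewrite /f /ins permM. Qed.

Lemma f_y : f y = ord_max.
Proof. by rewrite fE tpermL ext_max. Qed.

Lemma f_max : f ord_max = e y.
Proof. by rewrite fE tpermR. Qed.

Lemma f_other z : z != y -> z != ord_max -> f z = e z.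
Proof. by move=> zy zm; rewrite fE tpermD // eq_sym. Qed.

Lemma noMax : ord_max \notin porbit e y.
Proof.
rewrite /e /y porbit_ext_lift; apply/imsetP=> [[w _ E]].
by move: (neq_lift (ord_max : 'I_m.+2) w); rewrite -E eqxx.
Qed.

Lemma y_in : y \in porbit f ord_max.
Proof. by rewrite porbit_sym -f_y -(expg1 f) mem_porbit. Qed.

Lemma porbit_f_max : porbit f ord_max = ord_max |: porbit e y.
Proof.
apply/eqP; rewrite eqEsubset; apply/andP; split.
  apply: orbit_closed; last by rewrite !inE eqxx.
  move=> z; rewrite !inE => /orP[/eqP -> | zP].
    by rewrite f_max porbit_step ?porbit_id ?orbT.
  have [-> | zy] := eqVneq z y; first by rewrite f_y eqxx.
  have zm : z != ord_max by apply: contraNneq noMax => <-.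
  by rewrite f_other // porbit_step ?orbT.
rewrite subUset sub1set porbit_id /=.
apply: orbit_closed; last exact: y_in.
move=> z zP; have [-> | zm] := eqVneq z ord_max; first by rewrite /e ext_max porbit_id.
have [-> | zy] := eqVneq z y; first by rewrite -f_max porbit_step ?porbit_id.
by rewrite -f_other // porbit_step.
Qed.

Lemma porbit_f_other x : x \notin porbit f ord_max -> porbit f x = porbit e x.
Proof.
move=> xn.
have nz z : z \in porbit f x -> (z != y) && (z != ord_max).
  move=> zP; apply/andP; split.
    apply: contraNneq xn => E; rewrite -(porbit_same y_in) -E.
    by rewrite (porbit_same zP) porbit_id.
  apply: contraNneq xn => E; rewrite -E.
  by rewrite (porbit_same zP) porbit_id.
apply/eqP; rewrite eqEsubset; apply/andP; split.
  apply: orbit_closed; last exact: porbit_id.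
  move=> z zP; have : z \in porbit f x.
    by move: zP; apply/subsetP; apply: orbit_closed (porbit_id _ _) => w wP;
       case/andP: (nz w wP) => ? ?; rewrite -f_other // porbit_step.
  by move=> zf; case/andP: (nz z zf) => ? ?; rewrite f_other // porbit_step.
apply: orbit_closed; last exact: porbit_id.
by move=> z zP; case/andP: (nz z zP) => ? ?; rewrite -f_other // porbit_step.
Qed.

Lemma good_ins_lift P :
  good P (ins (s, lift ord_max y')) ord_max = good (fun l => P l.+1) s y'.
Proof.
rewrite -/y -/f /good /cycle_len porbit_f_max cardsU1 noMax.
rewrite /e porbit_ext_lift card_imset; last exact: lift_inj.
congr (_ && _); apply/forallP/forallP => H x.
  have := H (lift ord_max x); rewrite !inE negb_or (eq_sym (lift _ _)) neq_lift mem_imset /=;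
    last exact: lift_inj.
  case xP: (x \in porbit s y') => //= Hx.
  have hx : lift ord_max x \notin porbit f ord_max.
    rewrite porbit_f_max !inE negb_or (eq_sym (lift _ _)) neq_lift /e porbit_ext_lift mem_imset ?xP //.
    exact: lift_inj.
  move: Hx; rewrite (porbit_f_other hx) /e porbit_ext_lift card_imset //; exact: lift_inj.
apply/implyP => xn.
have hx : x \notin porbit f ord_max by rewrite porbit_f_max /e porbit_ext_lift.
rewrite (porbit_f_other hx).
move: xn; rewrite !inE negb_or => /andP[xm xn].
case: (unliftP ord_max x) xm xn => [x' -> _ | -> ]; last by rewrite eqxx.
rewrite mem_imset; last exact: lift_inj.
move=> xn; rewrite /e porbit_ext_lift card_imset; last exact: lift_inj.
by have := H x'; rewrite xn.
Qed.

End Ins2.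

Lemma good_ins_max m (s : 'S_m.+1) P :
  good P (ins (s, ord_max)) ord_max = P 1 && [forall x, odd (cycle_len s x)].
Proof.
have E : ins (s, ord_max) = ext s by rewrite /ins /= tperm1 mul1g.
rewrite /good E /cycle_len porbit_ext_max cards1; congr (_ && _).
apply/forallP/forallP => H x.
  by have := H (lift ord_max x); rewrite inE eq_sym neq_lift porbit_ext_lift card_imset //; apply: lift_inj.
apply/implyP; rewrite inE; case: (unliftP ord_max x) => [x' -> _ | ->]; last by rewrite eqxx.
by rewrite porbit_ext_lift card_imset //; apply: lift_inj.
Qed.
Definition Cnt m (P : pred nat) := #|[set s : 'S_m.+1 | good P s ord_max]|.
Definition Oc p := #|[set s : 'S_p | [forall x, odd (cycle_len s x)]]|.

Lemma cardsE' (T : finType) (b : pred T) : #|[set x | b x]| = \sum_x (b x : nat).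
Proof.
rewrite -sum1_card big_mkcond /=; apply: eq_bigr => x _; rewrite inE; by case: (b x).
Qed.

Lemma Cnt_ext m P Q : P =1 Q -> Cnt m P = Cnt m Q.
Proof.
by move=> PQ; rewrite /Cnt; apply: eq_card => s; rewrite !inE /good PQ.
Qed.

Lemma Cnt_dec m P :
  Cnt m.+1 P = P 1 * Oc m.+1 + m.+1 * Cnt m (fun l => P l.+1).
Proof.
rewrite /Cnt card_ins cardsE'.
have -> : \sum_(p : 'S_m.+1 * 'I_m.+2) (good P (ins p) ord_max : nat) =
     \sum_s \sum_(y < m.+2) (good P (ins (s, y)) ord_max : nat).
  by rewrite pair_big; apply: eq_bigr => [[s y]].
rewrite (eq_bigr (fun s => (P 1 && [forall x, odd (cycle_len s x)] : nat) +
      \sum_(i < m.+1) (good (fun l => P l.+1) s i : nat))); last first.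
  move=> s _; rewrite (bigD1_ord ord_max (P := xpredT)) //= good_ins_max.
  by congr (_ + _); apply: eq_bigr => i _; rewrite good_ins_lift.
rewrite big_split /=; congr (_ + _).
  rewrite /Oc cardsE'; case: (P 1); rewrite ?mul1n ?mul0n //.
  by rewrite big1.
rewrite exchange_big /=.
rewrite (eq_bigr (fun _ => Cnt m (fun l => P l.+1))).
  by rewrite sum_nat_const card_ord.
by move=> i _; rewrite /Cnt -(good_sym _ i) cardsE'.
Qed.
Lemma Cnt0 P : Cnt 0 P = P 1.
Proof.
rewrite /Cnt cardsE'.
have E : forall s : 'S_1, good P s ord_max = P 1.
  move=> s; rewrite /good.
  have L : cycle_len s ord_max = 1.
    apply/eqP; rewrite eqn_leq lt0n card_porbit_neq0 andbT.
    by rewrite -[X in _ <= X](card_ord 1) max_card.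
  rewrite L; case: (P 1) => //=; apply/forallP => x; apply/implyP.
  have -> : x = ord_max by apply: val_inj; case: x => [[|k] Hk].
  by rewrite porbit_id.
rewrite (eq_bigr (fun _ => (P 1 : nat))); last by move=> s _; rewrite E.
by rewrite sum_nat_const card_Sn mul1n.
Qed.

Lemma Oc0 : Oc 0 = 1.
Proof.
rewrite /Oc cardsE' (eq_bigr (fun _ => 1)).
  by rewrite sum_nat_const card_Sn.
by move=> s _; have -> : [forall x : 'I_0, odd (cycle_len s x)] by apply/forallP => [[]].
Qed.

Lemma Oc_Cnt m : Oc m.+1 = Cnt m odd.
Proof.
rewrite /Oc /Cnt; apply: eq_card => s; rewrite !inE /good.
apply/idP/idP.
  move/forallP => H; rewrite H /=; apply/forallP => x; apply/implyP => _; exact: H.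
case/andP => H1 /forallP H2; apply/forallP => x.
have := H2 x; case: (boolP (x \in porbit s ord_max)) => //= xP _.
by rewrite /cycle_len (porbit_same xP).
Qed.

Lemma Cnt_len0 m : Cnt m (fun l => l == 0) = 0.
Proof.
apply/eqP; rewrite cards_eq0; apply/eqP/setP => s; rewrite !inE /good.
by rewrite (negPf (card_porbit_neq0 _ _)).
Qed.

Lemma Cnt_fall j m : j <= m -> Cnt m (fun l => l == j.+1) = m ^_ j * Oc (m - j).
Proof.
elim: j m => [|j IH] [|m] //.
- by move=> _; rewrite Cnt0 Oc0.
- move=> _; rewrite Cnt_dec (@Cnt_ext _ _ (fun l => l == 0)) // Cnt_len0.
  by rewrite muln0 addn0 mul1n.
- rewrite ltnS => jm; rewrite Cnt_dec /= mul0n add0n.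
  rewrite (@Cnt_ext _ _ (fun l => l == j.+1)) // IH //.
  by rewrite ffactSS subSS mulnA.
Qed.

Lemma Cnt_even m : Cnt m (fun l => odd l.+1) = m * Oc m.
Proof.
case: m => [|m]; first by rewrite Cnt0.
rewrite Cnt_dec /= mul0n add0n (@Cnt_ext _ _ odd); last by move=> l /=; rewrite negbK.
by rewrite Oc_Cnt.
Qed.

Lemma Oc_rec m : Oc m.+2 = Oc m.+1 + m.+1 * m * Oc m.
Proof. by rewrite Oc_Cnt Cnt_dec Cnt_even /= mul1n mulnA. Qed.
Definition a q := if odd q then q else q.-1.

Lemma Oc_a2 p : Oc p.+1 = a p.+1 * Oc p /\ Oc p.+2 = a p.+2 * Oc p.+1.
Proof.
elim: p => [|p [IH1 IH2]].
  by rewrite Oc_rec Oc_Cnt Cnt0 Oc0 /a.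
split=> //; rewrite Oc_rec IH2 IH1.
rewrite /a /=; case: (odd p) => /=; lia.
Qed.

Lemma Oc_a p : Oc p.+1 = a p.+1 * Oc p.
Proof. by case: (Oc_a2 p). Qed.

Lemma Oc_gt0 p : 0 < Oc p.
Proof.
elim: p => [|p IH]; first by rewrite Oc0.
rewrite Oc_a muln_gt0 IH andbT /a /=.
by case: p {IH} => [|p] //=; case: (odd p).
Qed.

Definition Nn n r := if odd n then \prod_(i < r) (n - (2 * i + 1))%N
                     else \prod_(i < r.+1) (n - 2 * i)%N.
Definition Dn n r := if odd n then \prod_(i < r) (n - (2 * i + 2))%N
                     else \prod_(i < r.+1) (n - (2 * i + 1))%N.

Lemma Gid n r : r.*2.+1 <= n ->
  n ^_ r.*2.+1 * Oc (n - r.*2.+1) * Dn n r = Nn n r * Oc n.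
Proof.
elim: r => [|r IH].
  case: n => [|p] // _; rewrite ffactn1 subSS subn0 Oc_a /Nn /Dn /a.
  by case: (odd p.+1); rewrite ?big_ord0 ?big_ord1 /= ?muln0 ?add0n ?subSS ?subn0; ring.
move=> hr; have := IH (leq_trans (leqnSn _) (leq_trans (leqnSn _) hr)) => {}IH.
set q := n - r.+1.*2.+1.
have hn : n = q + r.*2.+3 by rewrite /q doubleS subnK.
have e1 : n - r.*2.+1 = q.+2 by lia.
have ef : n ^_ r.+1.*2.+1 = n ^_ r.*2.+1 * q.+2 * q.+1.
  by rewrite doubleS !ffactnSr; congr (_ * _ * _); lia.
rewrite e1 in IH; rewrite ef.
move: IH; rewrite Oc_a Oc_a /Nn /Dn !big_ord_recr /=.
have op : odd n = ~~ odd q by rewrite hn oddD /= odd_double; case: (odd q).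
rewrite op; case oq: (odd q) => /=; rewrite /a /= oq /=.
- have -> : n - 2 * r.+1 = q.+1 by lia.
  have -> : n - (2 * r.+1 + 1) = q by lia.
  by move=> IH; rewrite -[RHS]mulnAC -IH; ring.
- have -> : n - (2 * r + 1) = q.+2 by lia.
  have -> : n - (2 * r + 2) = q.+1 by lia.
  by move=> IH; rewrite -[RHS]mulnAC -IH; ring.
Qed.
Lemma sumY m k : odd k ->
  \sum_(s in odd_cycle_perms m.+1) Yk k s = m.+1 * Cnt m (fun l => l == k).
Proof.
move=> ok.
rewrite (eq_bigr (fun s => \sum_x (cycle_len s x == k : nat))); last first.
  by move=> s _; rewrite /Yk cardsE'.
rewrite exchange_big /=.
rewrite (eq_bigr (fun _ => Cnt m (fun l => l == k))); first by rewrite sum_nat_const card_ord.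
move=> x _; rewrite /Cnt -(good_sym _ x) cardsE' big_mkcond /=; apply: eq_bigr => s _.
have E : ([forall z, odd (cycle_len s z)] && (cycle_len s x == k)) =
         good (fun l => l == k) s x.
  rewrite /good; apply/idP/idP.
    case/andP => /forallP H lk; rewrite lk /=; apply/forallP => z; apply/implyP => _; exact: H.
  case/andP => lk /forallP H; rewrite lk andbT; apply/forallP => z.
  have := H z; case: (boolP (z \in porbit s x)) => //= zP _.
  by rewrite /cycle_len (porbit_same zP); move/eqP: lk; rewrite /cycle_len => ->.
by rewrite -E inE; case: [forall z, _].
Qed.

Import GRing.Theory Num.Theory.
Local Open Scope ring_scope.

Theorem proposition3p2 (n k : nat) :
  (0 < n)%N -> odd k -> (k <= n)%N ->
  EoY n k =
  if odd n then
    (\prod_(i < k./2) ((n%:R : rat) - (2 * i + 1)%:R)) /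
    (\prod_(i < k./2) ((n%:R : rat) - (2 * i + 2)%:R))
  else
    (\prod_(i < k.+1./2) ((n%:R : rat) - (2 * i)%:R)) /
    (\prod_(i < k.+1./2) ((n%:R : rat) - (2 * i + 1)%:R)).
Proof.
move=> n0 ok kn.
set r := k./2.
have hk : k = r.*2.+1 by rewrite -[k in LHS]odd_double_half ok.
have hk1 : k.+1./2 = r.+1 by rewrite hk -doubleS doubleK.
rewrite hk1.
have -> : (if odd n then
    (\prod_(i < r) ((n%:R : rat) - (2 * i + 1)%:R)) /
    (\prod_(i < r) ((n%:R : rat) - (2 * i + 2)%:R))
  else
    (\prod_(i < r.+1) ((n%:R : rat) - (2 * i)%:R)) /
    (\prod_(i < r.+1) ((n%:R : rat) - (2 * i + 1)%:R))) =
    (Nn n r)%:R / (Dn n r)%:R.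
  rewrite /Nn /Dn; case: (odd n); rewrite !natr_prod; congr (_ / _);
    apply: eq_bigr => i _; rewrite natrB //; have := ltn_ord i; lia.
have Dpos : (0 < Dn n r)%N.
  rewrite /Dn; case Hon: (odd n); apply: prodn_gt0 => i; rewrite subn_gt0;
    have := ltn_ord i; lia.
case: n n0 kn Dpos => [//|m] _ kn Dpos.
rewrite /EoY -natr_sum sumY // hk Cnt_fall; last by lia.
rewrite mulnA -ffactSS -subSS -hk.
apply/eqP; rewrite eqr_div ?pnatr_eq0 -?lt0n ?Oc_gt0 //.
rewrite -!natrM; apply/eqP; congr _%:R.
have := Gid (n := m.+1) (r := r); rewrite -hk /Oc; apply; lia.
Qed.
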